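(* Consider an instance of the bicriteria asymmetric traveling salesman problem (bi-ATSP) with tour set $\mathcal{C}$, vector criterion $D=(D_1,D_2)$, outcome set $\mathcal{D}=D(\mathcal{C})$, and $\mathcal{D}_i=D_i(\mathcal{C})$ for $i=1,2$. Suppose that $$P(\mathcal{D}) = \{ (y_1, y_2): y_2 = a - k y_1,\ y_1 \in \mathcal{D}_1,\ y_2 \in \mathcal{D}_2 \},$$ where $a>0$ and $k>0$ are constants. Suppose the 1st criterion $D_1$ is more important than the 2nd criterion $D_2$ with coefficient of relative importance $\theta'\in(0,1)$, and let $\hat{P}(\mathcal{D})$ be the corresponding reduced Pareto set (reduction with $i=1$, $j=2$, $\theta=\theta'$). If $\theta' \geqslant k/(k+1)$, then $\hat{P}(\mathcal{D})$ consists of exactly one element. If $\theta' < k/(k+1)$, then $\hat{P}(\mathcal{D}) = P(\mathcal{D})$.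
   Context: Bi-ATSP: given a complete directed graph $G=(V,E)$ on $n$ vertices, each arc $e\in E$ carries a weight vector $d(e)=(d_1(e),d_2(e))$ of positive numbers. $\mathcal{C}$ is the set of all $(n-1)!$ Hamiltonian circuits (tours) of $G$, and for a tour $C$, $D(C)=(D_1(C),D_2(C))$ with $D_j(C)=\sum_{e\in C} d_j(e)$. For vectors $y^*,y$, write $y^*\leq y$ if $y^*\neq y$ and $y^*_s\leqslant y_s$ for every coordinate $s$ (Pareto relation). For a vector criterion $F$ on $\mathcal{C}$, the set of pareto-optimal tours is $P_F(\mathcal{C})=\{C\in\mathcal{C}: \nexists C^*\in\mathcal{C},\ F(C^* )\leq F(C)\}$. The Pareto set is $P(\mathcal{D})=\{y\in\mathcal{D}: \nexists y^*\in\mathcal{D},\ y^*\leq y\}$. Reduced Pareto set: if criterion $D_i$ is declared more important than criterion $D_j$ ($\{i,j\}=\{1,2\}$) with coefficient of relative importance $\theta\in(0,1)$, define the new criterion $\hat D$ by $\hat D_j=\theta D_i+(1-\theta)D_j$ and $\hat D_i=D_i$, and set $\hat{P}(\mathcal{D})=D(P_{\hat D}(\mathcal{C}))$ (a subset of $P(\mathcal{D})$). *)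

(* Defs.v *)
From mathcomp Require Import all_boot all_order all_algebra all_fingroup.
Set Implicit Arguments. Unset Strict Implicit. Unset Printing Implicit Defensive.
Import Order.TTheory GRing.Theory Num.Theory.
Local Open Scope ring_scope.

(* A Hamiltonian circuit is
   encoded by its successor permutation s : the arcs of the tour are
   (i, s i); s is a tour iff it is a single cycle through all vertices. *)
Definition tour (n : nat) (s : {perm 'I_n}) : Prop :=
  forall i : 'I_n, porbit s i = [set: 'I_n].

Definition pos_weights (R : realFieldType) (n : nat)
  (d : 'I_n -> 'I_n -> R * R) : Prop :=
  forall i j : 'I_n, i != j -> 0 < (d i j).1 /\ 0 < (d i j).2.

Definition Dvec (R : realFieldType) (n : nat) (d : 'I_n -> 'I_n -> R * R)
  (s : {perm 'I_n}) : R * R :=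
  (\sum_(i : 'I_n) (d i (s i)).1, \sum_(i : 'I_n) (d i (s i)).2).

Definition pdom (R : realFieldType) (ys y : R * R) : Prop :=
  ys <> y /\ ys.1 <= y.1 /\ ys.2 <= y.2.

Definition pareto_tours (R : realFieldType) (n : nat)
  (F : {perm 'I_n} -> R * R) (C : {perm 'I_n}) : Prop :=
  tour C /\ ~ (exists Cs, tour Cs /\ pdom (F Cs) (F C)).

Definition outcomes (R : realFieldType) (n : nat) (d : 'I_n -> 'I_n -> R * R)
  (y : R * R) : Prop := exists C, tour C /\ Dvec d C = y.
Definition outcomes1 (R : realFieldType) (n : nat) (d : 'I_n -> 'I_n -> R * R)
  (t : R) : Prop := exists C, tour C /\ (Dvec d C).1 = t.
Definition outcomes2 (R : realFieldType) (n : nat) (d : 'I_n -> 'I_n -> R * R)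
  (t : R) : Prop := exists C, tour C /\ (Dvec d C).2 = t.

Definition pareto_set (R : realFieldType) (n : nat) (d : 'I_n -> 'I_n -> R * R)
  (y : R * R) : Prop :=
  outcomes d y /\ ~ (exists ys, outcomes d ys /\ pdom ys y).

Definition Dhat12 (R : realFieldType) (n : nat) (d : 'I_n -> 'I_n -> R * R)
  (th : R) (s : {perm 'I_n}) : R * R :=
  ((Dvec d s).1, th * (Dvec d s).1 + (1 - th) * (Dvec d s).2).

Definition reduced_pareto12 (R : realFieldType) (n : nat)
  (d : 'I_n -> 'I_n -> R * R) (th : R) (y : R * R) : Prop :=
  exists C, pareto_tours (Dhat12 d th) C /\ Dvec d C = y.

(* Main.v *)
Require Import Defs.
From mathcomp Require Import all_boot all_order all_algebra all_fingroup.
Import Order.TTheory GRing.Theory Num.Theory.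
From Stdlib Require Import Classical.
From mathcomp Require Import ring lra.
Local Open Scope ring_scope.

Lemma tour_exists (n : nat) : exists s : {perm 'I_n}, tour s.
Proof.
exists (perm (@ordS_inj n)) => i; apply/setP => j; rewrite inE.
apply/porbitP; exists (j + n - i)%N; apply: val_inj.
have H : forall m, val (iter m (@ordS n) i) = ((i + m) %% n)%N.
  elim=> [|m IH] /=; first by rewrite addn0 modn_small.
  by rewrite IH -[((i + m) %% n).+1]addn1 modnDml addn1 addnS.
rewrite permX (eq_iter (f':=@ordS n)); last by move=> x; rewrite permE.
rewrite H addnBA; last by apply: leq_trans (ltnW (ltn_ord i)) (leq_addl _ _).
by rewrite addKn modnDr modn_small.
Qed.

Lemma exists_min (R : realFieldType) (T : finType) (P : T -> Prop)
  (phi : T -> R) (x0 : T) :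
  P x0 -> exists y, P y /\ forall z, P z -> phi y <= phi z.
Proof.
move=> Px0.
suff: forall s : seq T, (exists x, x \in s /\ P x) ->
  exists y, P y /\ forall z, z \in s -> P z -> phi y <= phi z.
  move=> /(_ (enum T)) [|y [Py Hy]]; first by exists x0; rewrite mem_enum.
  by exists y; split=> // z; apply: Hy; rewrite mem_enum.
elim=> [|x s IH] [w [Hw Pw]]; first by [].
case: (classic (exists x, x \in s /\ P x)) => [/IH [y [Py Hy]] | Hn].
  case: (classic (P x)) => Px.
    case: (leP (phi x) (phi y)) => hxy.
      exists x; split=> // z; rewrite inE => /orP [/eqP -> //|zs Pz].
      exact: le_trans hxy (Hy z zs Pz).
    exists y; split=> // z; rewrite inE => /orP [/eqP ->|zs Pz].
      by move=> _; apply: ltW.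
    exact: Hy.
  exists y; split=> // z; rewrite inE => /orP [/eqP -> //|zs Pz].
  exact: Hy.
have wx : w = x.
  move: Hw; rewrite inE => /orP [/eqP -> //|ws]; exfalso; apply: Hn.
  by exists w.
subst w; exists x; split=> // z; rewrite inE => /orP [/eqP -> //|zs Pz].
by exfalso; apply: Hn; exists z.
Qed.

Lemma sum_lt (R : realFieldType) (a1 a2 b1 b2 : R) :
  (a1, a2) <> (b1, b2) -> a1 <= b1 -> a2 <= b2 -> a1 + a2 < b1 + b2.
Proof.
move=> ne l1 l2.
have [h1|h1] : a1 = b1 \/ a1 < b1.
  by move: l1; rewrite le_eqVlt => /orP [/eqP ->|->]; [left|right].
  have [h2|h2] : a2 = b2 \/ a2 < b2.
    by move: l2; rewrite le_eqVlt => /orP [/eqP ->|->]; [left|right].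
    by exfalso; apply: ne; rewrite h1 h2.
  lra.
lra.
Qed.

Theorem theorem2 (R : realFieldType) (n : nat) (d : 'I_n -> 'I_n -> R * R)
  (a k th : R) :
  (2 <= n)%N -> pos_weights d ->
  0 < a -> 0 < k ->
  (forall y : R * R, pareto_set d y <->
     (y.2 = a - k * y.1 /\ outcomes1 d y.1 /\ outcomes2 d y.2)) ->
  0 < th -> th < 1 ->
  (k / (k + 1) <= th ->
     exists y0 : R * R, forall y, reduced_pareto12 d th y <-> y = y0) /\
  (th < k / (k + 1) ->
     forall y : R * R, reduced_pareto12 d th y <-> pareto_set d y).
Proof.
move=> n2 pw a0 k0 HP th0 th1.
set H := Dhat12 d th.
have F1 : forall C Cs, pdom (Dvec d Cs) (Dvec d C) -> pdom (H Cs) (H C).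
  move=> C Cs; rewrite /pdom /H /Dhat12.
  case: (Dvec d Cs) => z1 z2; case: (Dvec d C) => y1 y2 /= [ne [l1 l2]].
  split; last by split=> //; nra.
  case=> e1 e2; apply: ne; subst z1; congr (_, _).
  have : (1 - th) * (z2 - y2) = 0 by rewrite mulrBr; lra.
  by move/eqP; rewrite mulf_eq0 subr_eq0 => /orP [/eqP h|/eqP //]; lra.
have F2 : forall C, pareto_tours H C -> pareto_set d (Dvec d C).
  move=> C [tC nd]; split; first by exists C.
  move=> [ys [[Cs [tCs eCs]] hd]]; apply: nd; exists Cs; split=> //.
  by apply: F1; rewrite eCs.
have F3 : forall C, tour C -> exists C', pareto_tours H C' /\
    (H C').1 <= (H C).1 /\ (H C').2 <= (H C).2.
  move=> C tC.
  have [C' [[tC' [h1 h2]] Hmin]] := @exists_min _ _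
    (fun C' => tour C' /\ (H C').1 <= (H C).1 /\ (H C').2 <= (H C).2)
    (fun C' => (H C').1 + (H C').2) C (conj tC (conj (lexx _) (lexx _))).
  exists C'; split=> //; split=> // -[Cs [tCs [hne [l1 l2]]]].
  have := Hmin Cs (conj tCs (conj (le_trans l1 h1) (le_trans l2 h2))).
  move: hne l1 l2; case: (H Cs) => p1 p2; case: (H C') => q1 q2 /= hne l1 l2.
  by have := @sum_lt _ _ _ _ _ hne l1 l2; lra.
have line : forall C, pareto_tours H C -> (Dvec d C).2 = a - k * (Dvec d C).1.
  by move=> C /F2 /HP [].
have [C0 tC0] := tour_exists n.
have hk : k / (k + 1) * (k + 1) = k.
  by rewrite divfK //; apply/eqP => h; lra.
split.
- move=> hth.
  have hc : 0 <= th - (1 - th) * k by nra.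
  have [C1 [pC1 _]] := F3 C0 tC0.
  have [Cm [pCm Hm]] := @exists_min _ _ (pareto_tours H) (fun C => (Dvec d C).1) C1 pC1.
  exists (Dvec d Cm) => y; split; last by move=> ->; exists Cm.
  move=> [C [pC <-]].
  have le1 := Hm C pC.
  have lC := line _ pC; have lCm := line _ pCm.
  have [e|lt] : (Dvec d Cm).1 = (Dvec d C).1 \/ (Dvec d Cm).1 < (Dvec d C).1.
    by move: le1; rewrite le_eqVlt => /orP [/eqP ->|->]; [left|right].
    move: lC lCm e; case: (Dvec d Cm) => p1 p2; case: (Dvec d C) => q1 q2 /=.
    by move=> -> -> ->.
  exfalso; case: pC => _ []; exists Cm; split; first by case: pCm.
  rewrite /pdom /H /Dhat12.
  move: lC lCm lt; case: (Dvec d Cm) => p1 p2; case: (Dvec d C) => q1 q2 /=.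
  move=> e1 e2 lt; split; first by case=> e; move: lt; rewrite e ltxx.
  split; first exact: ltW.
  rewrite e1 e2; nra.
- move=> hth.
  have hc : th - (1 - th) * k < 0 by nra.
  move=> y; split; first by move=> [C [pC <-]]; exact: F2.
  move=> Py; have [[C [tC eC]] _] := Py.
  have [C' [pC' [l1 l2]]] := F3 C tC.
  exists C'; split=> //.
  have [ly _] := proj1 (HP y) Py.
  have lC' := line _ pC'.
  move: l1 l2; rewrite /H /Dhat12 eC.
  move: lC' ly; case: (Dvec d C') => p1 p2; case: y {Py eC} => q1 q2 /=.
  move=> e1 e2 l1 l2.
  have ep : p1 = q1.
    apply/eqP; rewrite eq_le l1 /=.
    rewrite e1 e2 in l2; nra.
  by rewrite e1 e2 ep.
Qed.
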